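(* For the biased batched SVRG (Algorithm 3), $$b_j\,\mathbb{E}\langle e_j,\tilde x_j-\tilde x_{j-1}\rangle=-\eta_j(1-\lambda)B_j\,\mathbb{E}\langle e_j,\nabla f(\tilde x_j)\rangle-\eta_jB_j\,\mathbb{E}\|e_j\|^2.$$
   Context: Setting: $f(x)=\frac1n\sum_{i=1}^n f_i(x)$ with each $f_i:\mathbb{R}^d\to\mathbb{R}$ differentiable and $L$-smooth. For $\mathcal I\subset\{1,\dots,n\}$, $\nabla f_{\mathcal I}(x)=\frac1{|\mathcal I|}\sum_{i\in\mathcal I}\nabla f_i(x)$. $N\sim\mathrm{Geom}(\gamma')$ means $P(N=k)=(1-\gamma')\gamma'^k$, $k\ge0$. Epoch $j$ of the batched SVRG scheme: $\mathcal I_j$ uniformly random of size $B_j$, $g_j=\nabla f_{\mathcal I_j}(\tilde x_{j-1})$, $x^{(j)}_0=\tilde x_{j-1}$; $N_j\sim\mathrm{Geom}(B_j/(B_j+b_j))$ drawn independently (mean $B_j/b_j$); for $k=0,\dots,N_j-1$, $\tilde{\mathcal I}_k$ uniformly random of size $b_j$ and $x^{(j)}_{k+1}=x^{(j)}_k-\eta_jv^{(j)}_k$; $\tilde x_j=x^{(j)}_{N_j}$. Algorithm 3 (biased, $0<\lambda<1$): $v^{(j)}_k=(1-\lambda)(\nabla f_{\tilde{\mathcal I}_k}(x^{(j)}_k)-\nabla f_{\tilde{\mathcal I}_k}(x^{(j)}_0))+\lambda g_j$, and $e_j=\lambda\nabla f_{\mathcal I_j}(\tilde x_{j-1})-(1-\lambda)\nabla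 f(\tilde x_{j-1})$. $\mathbb{E}$ is expectation over all randomness. *)

(* Defs.v *)
From HB Require Import structures.
From mathcomp Require Import all_boot all_order all_algebra.
From mathcomp Require Import all_classical all_reals all_analysis.
Set Implicit Arguments. Unset Strict Implicit. Unset Printing Implicit Defensive.
Import Order.TTheory GRing.Theory Num.Theory.
Import numFieldNormedType.Exports.
Local Open Scope ring_scope.

Section SVRG.
Variables (R : realType) (n d : nat).
Local Notation vec := 'rV[R]_d.

Definition dot (u v : vec) : R := \sum_(k < d) u 0 k * v 0 k.
Definition enorm (v : vec) : R := Num.sqrt (dot v v).

Definition grad (f : vec -> R) (x : vec) : vec :=
  \row_(k < d) derive f x (delta_mx 0 k).

Definition Lsmooth (L : R) (f : vec -> R) : Prop :=
  (forall x, differentiable f x) /\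
  (forall x y, enorm (grad f x - grad f y) <= L * enorm (x - y)).

Definition gradS (F : 'I_n -> vec -> R) (S : {set 'I_n}) (x : vec) : vec :=
  (#|S|%:R)^-1 *: \sum_(i in S) grad (F i) x.

Definition gradfull (F : 'I_n -> vec -> R) (x : vec) : vec :=
  (n%:R)^-1 *: \sum_(i < n) grad (F i) x.

Definition batches (k : nat) : {set {set 'I_n}} := [set S : {set 'I_n} | #|S| == k].

Definition svrg_step (F : 'I_n -> vec -> R) (lam eta : R) (x0 g : vec)
  (x : vec) (S : {set 'I_n}) : vec :=
  x - eta *: ((1 - lam) *: (gradS F S x - gradS F S x0) + lam *: g).

(* final iterate x~_j = x_{N_j} of the epoch started at x0 = x~_{j-1}, with
   outer batch I and inner batches s = [:: I~_0; ...; I~_{N_j - 1}] *)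
Definition traj (F : 'I_n -> vec -> R) (lam eta : R) (x0 : vec)
  (I : {set 'I_n}) (s : seq {set 'I_n}) : vec :=
  foldl (svrg_step F lam eta x0 (gradS F I x0)) x0 s.

Definition err (F : 'I_n -> vec -> R) (lam : R) (x0 : vec) (I : {set 'I_n}) : vec :=
  lam *: gradS F I x0 - (1 - lam) *: gradfull F x0.

(* parameter of the geometric law: N ~ Geom(B/(B+b)) *)
Definition gam (B b : nat) : R := B%:R / (B + b)%:R.

(* N-th term of the expectation over (N, I~_0, ..., I~_{N-1}):
   P(N) * sum over N independent uniform inner batches of size b *)
Definition geom_term (B b : nat) (G : seq {set 'I_n} -> R) (N : nat) : R :=
  (1 - gam B b) * gam B b ^+ N *
  \sum_(t : N.-tuple {set 'I_n} | [forall i, tnth t i \in batches b])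
     (#|batches b|%:R)^-N * G t.

Definition geomE (B b : nat) (G : seq {set 'I_n} -> R) : R :=
  limn (series (geom_term B b G)).

Definition geom_integrable (B b : nat) (G : seq {set 'I_n} -> R) : Prop :=
  cvgn (series (geom_term B b (fun s => `|G s|))).

(* expectation over all randomness of epoch j (I_j, N_j, inner batches),
   for a random quantity H I s *)
Definition epochE (B b : nat) (H : {set 'I_n} -> seq {set 'I_n} -> R) : R :=
  \sum_(I in batches B) (#|batches B|%:R)^-1 * geomE B b (H I).

Definition epoch_integrable (B b : nat) (H : {set 'I_n} -> seq {set 'I_n} -> R) : Prop :=
  forall I, I \in batches B -> geom_integrable B b (H I).

(* the three random quantities of the statement, as functions of
   x0 = x~_{j-1}, I = I_j and s = inner batches *)
Definition Q1 F lam eta (x0 : vec) I s : R :=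
  dot (err F lam x0 I) (traj F lam eta x0 I s - x0).
Definition Q2 F lam eta (x0 : vec) I s : R :=
  dot (err F lam x0 I) (gradfull F (traj F lam eta x0 I s)).
Definition Q3 F lam (x0 : vec) I (s : seq {set 'I_n}) : R :=
  dot (err F lam x0 I) (err F lam x0 I).

End SVRG.

(* Full expectation: the history (epochs 1..j-1) lives on a probability space
   (Omega, P), X = x~_{j-1}; epoch j's randomness is fresh and independent, so
   E[H] = int_Omega E_epoch(X w)[H] dP(w). *)
Definition fullE (R : realType) (dsp : measure_display) (Omega : measurableType dsp)
  (P : probability Omega R) (n d : nat) (B b : nat)
  (H : 'rV[R]_d -> {set 'I_n} -> seq {set 'I_n} -> R) (X : Omega -> 'rV[R]_d) : R :=
  Rintegral P setT (fun w => epochE B b (H (X w))).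

(* Main.v *)
Require Import Defs.
From HB Require Import structures.
From mathcomp Require Import all_boot all_order all_algebra.
From mathcomp Require Import all_classical all_reals all_analysis.
From mathcomp Require Import perm.
From mathcomp.algebra_tactics Require Import ring lra.
Import Order.TTheory GRing.Theory Num.Theory.
Import numFieldNormedType.Exports.
Local Open Scope ring_scope.
Lemma sum_cons (R : realType) (T : finType) (P : pred T) (N : nat) (h : seq T -> R) :
  \sum_(t : N.+1.-tuple T | [forall i, P (tnth t i)]) h t =
  \sum_(x | P x) \sum_(t : N.-tuple T | [forall i, P (tnth t i)]) h (x :: t).
Proof.
rewrite pair_big_dep /=.
rewrite (reindex (fun p : T * N.-tuple T => [tuple of p.1 :: p.2])) /=.
  apply: eq_bigl => -[x t] /=.
  apply/forallP/andP => [H|[Px /forallP Ht] i].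
    split; first by have := H ord0.
    by apply/forallP => i; have := H (lift ord0 i); rewrite tnthS.
  by case: (unliftP ord0 i) => [j ->|->]; rewrite ?tnthS ?tnth0.
exists (fun t : N.+1.-tuple T => (thead t, [tuple of behead t])).
  by move=> [x t] _ /=; congr pair; apply: val_inj.
by move=> t _ /=; rewrite [RHS]tuple_eta.
Qed.

Section Avg.
Variables (R : realType) (n b : nat).
Local Notation T := {set 'I_n}.
Definition KK : R := #|batches n b|%:R.
Definition Avg N (h : seq T -> R) : R :=
  \sum_(t : N.-tuple T | [forall i, tnth t i \in batches n b]) KK ^- N * h t.

Lemma Avg0 h : Avg 0 h = h [::].
Proof.
rewrite /Avg (big_pred1 [tuple]) ?expr0 ?invr1 ?mul1r //.
move=> t /=; rewrite [t]tuple0; transitivity true; [by apply/forallP => -[] | exact/esym/eqP].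
Qed.

Lemma Avg_cons N h : Avg N.+1 h = KK^-1 * \sum_(S in batches n b) Avg N (fun s => h (S :: s)).
Proof.
rewrite /Avg (@sum_cons R _ (fun S : T => S \in batches n b) N (fun s => KK ^- N.+1 * h s)) mulr_sumr; apply: eq_bigr => S _.
rewrite mulr_sumr; apply: eq_bigr => t _.
by rewrite exprS invfM mulrA.
Qed.

Lemma KK_neq0 : (b <= n)%N -> KK != 0.
Proof.
move=> bn; rewrite /KK /batches card_draws card_ord pnatr_eq0 -lt0n bin_gt0 //.
Qed.

Lemma Avg_lin N a h1 h2 : Avg N (fun s => a * h1 s + h2 s) = a * Avg N h1 + Avg N h2.
Proof.
rewrite /Avg mulr_sumr -big_split; apply: eq_bigr => t _ /=.
by rewrite mulrDr mulrCA.
Qed.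

Lemma Avg_const N c : (b <= n)%N -> Avg N (fun _ => c) = c.
Proof.
move=> bn; elim: N => [|N IH]; first by rewrite Avg0.
rewrite Avg_cons (eq_bigr (fun _ => c)) // sumr_const -mulr_natl mulrA.
by rewrite mulVf ?mul1r // KK_neq0.
Qed.

Lemma Avg_ext N h1 h2 : (forall s, h1 s = h2 s) -> Avg N h1 = Avg N h2.
Proof. by move=> e; apply: eq_bigr => t _; rewrite e. Qed.
End Avg.

Section Markov.
Variables (R : realType) (n d b : nat) (F : 'I_n -> 'rV[R]_d -> R) (lam eta : R) (x0 g : 'rV[R]_d).
Local Notation step := (svrg_step F lam eta x0 g).

Lemma markov N y (Phi : 'rV[R]_d -> R) :
  Avg R n b N.+1 (fun s => Phi (foldl step y s)) =
  Avg R n b N (fun s => (KK R n b)^-1 * \sum_(S in batches n b) Phi (step (foldl step y s) S)).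
Proof.
elim: N y => [|N IH] y.
  rewrite Avg_cons Avg0 /=; congr (_ * _); apply: eq_bigr => S _.
  by rewrite Avg0.
rewrite Avg_cons [RHS]Avg_cons; congr (_ * _); apply: eq_bigr => S _ /=.
exact: IH.
Qed.
End Markov.

Section Batch.
Variables (R : realType) (n b : nat).
Local Notation A := (batches n b).

Lemma cnt_sym (i j : 'I_n) :
  \sum_(S in A | i \in S) (1:R) = \sum_(S in A | j \in S) (1:R).
Proof.
rewrite (reindex (fun S : {set 'I_n} => tperm i j @: S)) /=; last first.
  exists (fun S : {set 'I_n} => tperm i j @: S) => S _;
  by rewrite -imset_comp (eq_imset _ (tpermK i j)) imset_id.
apply: eq_bigl => S; rewrite !inE card_imset; last exact: perm_inj.
by rewrite -{1}(tpermR i j) mem_imset //; exact: perm_inj.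
Qed.

Lemma sum_in (V : lmodType R) (G : 'I_n -> V) :
  \sum_(S in A) \sum_(i in S) G i = \sum_i (\sum_(S in A | i \in S) (1:R)) *: G i.
Proof.
under eq_bigr do rewrite big_mkcond /=.
rewrite exchange_big /=; apply: eq_bigr => i _.
by rewrite scaler_suml -big_mkcondr /=; apply: eq_bigr => S _; rewrite scale1r.
Qed.

Lemma avg_gradS d (F : 'I_n -> 'rV[R]_d -> R) x : (0 < b <= n)%N ->
  (KK R n b)^-1 *: \sum_(S in A) gradS F S x = gradfull F x.
Proof.
case/andP => b0 bn.
have n0 : (0 < n)%N by apply: leq_trans bn.
pose i0 := Ordinal n0.
pose c := \sum_(S in A | i0 \in S) (1:R).
have hc : forall (V : lmodType R) (G : 'I_n -> V), \sum_(S in A) \sum_(i in S) G i = c *: \sum_i G i.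
  move=> V G; rewrite sum_in scaler_sumr; apply: eq_bigr => i _.
  by rewrite /c (cnt_sym i0 i).
have ncK : n%:R * c = KK R n b * b%:R.
  have := hc _ (fun _ => (1:R)); rewrite sumr_const card_ord.
  rewrite -[c *: _]/(c * n%:R) mulrC => <-.
  rewrite (eq_bigr (fun _ => b%:R)) => [|S]; last first.
    by rewrite inE => /eqP <-; rewrite sumr_const.
  by rewrite sumr_const /KK mulr_natl.
have K0 := KK_neq0 R n b bn.
have b0' : (b%:R : R) != 0 by rewrite pnatr_eq0 -lt0n.
have n0' : (n%:R : R) != 0 by rewrite pnatr_eq0 -lt0n.
have -> : \sum_(S in A) gradS F S x = \sum_(S in A) (b%:R)^-1 *: \sum_(i in S) grad (F i) x.
  by apply: eq_bigr => S; rewrite inE => /eqP <-.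
rewrite /gradfull.
rewrite -scaler_sumr hc !scalerA; congr (_ *: _).
rewrite (_ : c = n%:R^-1 * (KK R n b * b%:R)); last by rewrite -ncK mulKf.
by field; rewrite K0 b0' n0'.
Qed.
End Batch.

Section Dot.
Variables (R : realType) (d : nat).
Implicit Types u v w : 'rV[R]_d.
Lemma dotD u v w : dot u (v + w) = dot u v + dot u w.
Proof. by rewrite /dot -big_split; apply: eq_bigr => k _; rewrite mxE mulrDr. Qed.
Lemma dotZ u a v : dot u (a *: v) = a * dot u v.
Proof. by rewrite /dot mulr_sumr; apply: eq_bigr => k _; rewrite mxE mulrCA. Qed.
Lemma dotB u v w : dot u (v - w) = dot u v - dot u w.
Proof. by rewrite /dot -sumrB; apply: eq_bigr => k _; rewrite !mxE mulrBr. Qed.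
Lemma dot0 u : dot u 0 = 0.
Proof. by rewrite /dot big1 // => k _; rewrite mxE mulr0. Qed.
Lemma dot_sum u (I : finType) (P : pred I) (G : I -> 'rV[R]_d) :
  dot u (\sum_(i | P i) G i) = \sum_(i | P i) dot u (G i).
Proof. exact: (big_morph (dot u) (dotD u) (dot0 u)). Qed.
End Dot.

Section OneStep.
Variables (R : realType) (n d b : nat) (F : 'I_n -> 'rV[R]_d -> R) (lam eta : R) (x0 g : 'rV[R]_d).
Local Notation step := (svrg_step F lam eta x0 g).

Lemma one_step u y : (0 < b <= n)%N ->
  (KK R n b)^-1 * \sum_(S in batches n b) dot u (step y S - x0) =
  dot u (y - x0) - eta * (1 - lam) * dot u (gradfull F y)
  - eta * dot u (lam *: g - (1 - lam) *: gradfull F x0).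
Proof.
move=> hb; have K0 : KK R n b != 0 by apply: KK_neq0; case/andP: hb.
have E : forall S, dot u (step y S - x0) = dot u (y - x0)
   - (eta * (1 - lam)) * dot u (gradS F S y) + (eta * (1 - lam)) * dot u (gradS F S x0)
   - (eta * lam) * dot u g.
  move=> S; rewrite /svrg_step.
  rewrite (_ : y - eta *: ((1 - lam) *: (gradS F S y - gradS F S x0) + lam *: g) - x0 =
     (y - x0) + (- (eta * (1 - lam))) *: gradS F S y + (eta * (1 - lam)) *: gradS F S x0
     + (- (eta * lam)) *: g); last first.
    by apply/rowP => k; rewrite !mxE; ring.
  by rewrite !dotD !dotZ; ring.
have L : forall (a p q : R) (X Y : {set 'I_n} -> R),
    \sum_(S in batches n b) (a + p * X S + q * Y S) =
    KK R n b * a + p * \sum_(S in batches n b) X S + q * \sum_(S in batches n b) Y S.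
  move=> a p q X Y; rewrite !big_split /= sumr_const -!mulr_sumr.
  by rewrite /KK mulr_natl.
have G : forall z, \sum_(S in batches n b) dot u (gradS F S z) = KK R n b * dot u (gradfull F z).
  by move=> z; rewrite -(avg_gradS R n b d F z hb) dotZ -dot_sum mulrA mulfV // mul1r.
have -> : \sum_(S in batches n b) dot u (step y S - x0) = \sum_(S in batches n b) ((dot u (y - x0) - (eta * lam) * dot u g)
   + (- (eta * (1 - lam))) * dot u (gradS F S y) + (eta * (1 - lam)) * dot u (gradS F S x0)).
  by apply: eq_bigr => S _; rewrite E; ring.
rewrite L !G (dotB _ _ u (lam *: g)) (dotZ _ _ u lam g) (dotZ _ _ u (1 - lam) (gradfull F x0)).
move: (dot u (y - x0)) (dot u g) (dot u (gradfull F y)) (dot u (gradfull F x0)) => a1 a2 a3 a4.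
by field.
Qed.
End OneStep.

Lemma abs_cvg (R : realType) (n B b : nat) (G : seq {set 'I_n} -> R) :
  (0 < B)%N ->
  geom_integrable B b G -> cvgn (series (geom_term B b G)).
Proof.
move=> B0 hG; apply: normed_cvg; rewrite /normed_series_of /=.
have g0 : 0 <= gam R B b by rewrite /gam divr_ge0 // ler0n.
have g1 : gam R B b <= 1.
  by rewrite /gam ler_pdivrMr ?mul1r ?ler_nat ?leq_addr // ltr0n addn_gt0 B0.
apply: (series_le_cvg _ _ _ hG) => N.
- exact: normr_ge0.
- rewrite /geom_term; apply: mulr_ge0; first by rewrite mulr_ge0 ?exprn_ge0 // subr_ge0.
  by apply: sumr_ge0 => t _; rewrite mulr_ge0 ?invr_ge0 ?exprn_ge0 ?ler0n.
rewrite /geom_term normrM ger0_norm; last first.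
  by rewrite mulr_ge0 ?exprn_ge0 // subr_ge0.
apply: ler_wpM2l; first by rewrite mulr_ge0 ?exprn_ge0 // subr_ge0.
apply: le_trans (ler_norm_sum _ _ _) _.
by apply: ler_sum => t _; rewrite normrM ger0_norm //.
Qed.

Lemma Avg_lin3 (R : realType) (n b N : nat) (h1 h2 : seq {set 'I_n} -> R) (p q : R) :
  (b <= n)%N ->
  Avg R n b N (fun s => h1 s - p * h2 s - q) = Avg R n b N h1 - p * Avg R n b N h2 - q.
Proof.
move=> bn.
transitivity (Avg R n b N h1 - p * Avg R n b N h2 - q * Avg R n b N (fun _ => 1)); last first.
  by rewrite Avg_const // mulr1.
rewrite /Avg !mulr_sumr -!sumrB; apply: eq_bigr => t _; ring.
Qed.

Section Geom.
Variables (R : realType) (n d : nat) (F : 'I_n -> 'rV[R]_d -> R) (lam eta : R) (B b : nat)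
  (x0 : 'rV[R]_d) (I : {set 'I_n}).

Lemma geom_id : (0 < B)%N -> (0 < b <= n)%N ->
  geom_integrable B b (Q1 F lam eta x0 I) -> geom_integrable B b (Q2 F lam eta x0 I) ->
  b%:R * geomE B b (Q1 F lam eta x0 I) =
  - (eta * (1 - lam) * B%:R) * geomE B b (Q2 F lam eta x0 I)
  - eta * B%:R * geomE B b (Q3 F lam x0 I).
Proof.
move=> B0 hb i1 i2; have bn : (b <= n)%N by case/andP: hb.
set e := err F lam x0 I; set g := gradS F I x0.
have hz : forall N, Avg R n b N (Q3 F lam x0 I) = dot e e.
  by move=> N; exact: (Avg_const R n b N (dot e e) bn).
have hA : forall N, Avg R n b N.+1 (Q1 F lam eta x0 I) =
    Avg R n b N (Q1 F lam eta x0 I) - eta * (1 - lam) * Avg R n b N (Q2 F lam eta x0 I)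
    - eta * dot e e.
  move=> N.
  rewrite -[Q1 F lam eta x0 I in LHS]/(fun s => dot e (foldl (svrg_step F lam eta x0 g) x0 s - x0)).
  rewrite (markov R n d b F lam eta x0 g N x0 (fun y => dot e (y - x0))).
  rewrite (Avg_ext R n b N _ (fun s => Q1 F lam eta x0 I s - eta * (1 - lam) * Q2 F lam eta x0 I s
     - eta * dot e e)); last first.
    by move=> s; rewrite one_step.
  by rewrite Avg_lin3.
set gm := gam R B b.
set u := geom_term B b (Q1 F lam eta x0 I).
set v := geom_term B b (Q2 F lam eta x0 I).
set z := geom_term B b (Q3 F lam x0 I).
have hu : forall N, u N.+1 = gm * (u N - eta * (1 - lam) * v N - eta * z N).
  move=> N; rewrite /u /v /z /geom_term -!/(Avg R n b _ _) hA hz exprS /gm.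
  ring.
have u0 : u 0%N = 0.
  rewrite /u /geom_term -/(Avg R n b 0 _) Avg0 /Q1 /traj /= subrr dot0.
  by rewrite mulr0.
have hs : forall M, series u M.+1 = gm * (series u M - eta * (1 - lam) * series v M - eta * series z M).
  move=> M; rewrite /series /= big_nat_recl // u0 add0r.
  rewrite (eq_bigr _ (fun k _ => hu k)) -mulr_sumr !sumrB -!mulr_sumr.
  done.
have cu : cvgn (series u) by exact: abs_cvg.
have cv : cvgn (series v) by exact: abs_cvg.
have gm1 : `|gm| < 1.
  have Bb : (0 < B + b)%N by rewrite addn_gt0 B0.
  rewrite /gm /gam ger0_norm ?divr_ge0 ?ler0n //.
  rewrite ltr_pdivrMr ?ltr0n // mul1r ltr_nat.
  by rewrite -[X in (X < _)%N]addn0 ltn_add2l; case/andP: hb.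
have cz : cvgn (series z).
  have -> : z = geometric ((1 - gm) * dot e e) gm.
    apply: funext => N; rewrite /z /geom_term -/(Avg R n b _ _) hz /= /gm.
    by rewrite mulrAC.
  exact: is_cvg_geometric_series.
have h := cvgMl_tmp (a := gm) (cvgB (cvgB cu (cvgMl_tmp (a := eta * (1 - lam)) cv)) (cvgMl_tmp (a := eta) cz)).
have E : (fun x => gm * ((series u - (fun x => eta * (1 - lam) * series v x)) - (fun x => eta * series z x)) x)
    = (fun M => series u M.+1).
  by apply: funext => M /=; rewrite hs.
rewrite E cvg_shiftS in h.
have L : limn (series u) = gm * (limn (series u) - eta * (1 - lam) * limn (series v) - eta * limn (series z)).
  apply: cvg_lim; last apply: h; try exact: _.
rewrite /geomE -/u -/v -/z.
move: L; set La := limn (series u); set Lv := limn (series v); set Lz := limn (series z) => L.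
have Bb : (B%:R + b%:R) != 0 :> R by rewrite -natrD pnatr_eq0 addn_eq0 negb_and -lt0n B0.
move: L; rewrite /gm /gam natrD => L.
have L2 : (B%:R + b%:R) * La = B%:R * (La - eta * (1 - lam) * Lv - eta * Lz).
  by rewrite {1}L; field.
move: L2; clear L h E; move: (B%:R : R) (b%:R : R) La Lv Lz => x y a1 a2 a3 L2.
have -> : y * a1 = (x + y) * a1 - x * a1 by ring.
by rewrite L2; ring.
Qed.
End Geom.

Theorem lemmaB10 (R : realType) (dsp : measure_display) (Omega : measurableType dsp)
  (P : probability Omega R) (n d : nat) (F : 'I_n -> 'rV[R]_d -> R) (L : R)
  (X : Omega -> 'rV[R]_d) (B b : nat) (eta lam : R) :
  (0 < n)%N ->
  (forall i, Lsmooth L (F i)) ->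
  (0 < B <= n)%N -> (0 < b <= n)%N ->
  0 < lam < 1 ->
  (forall w, epoch_integrable B b (Q1 F lam eta (X w))) ->
  (forall w, epoch_integrable B b (Q2 F lam eta (X w))) ->
  P.-integrable setT (fun w => (epochE B b (Q1 F lam eta (X w)))%:E) ->
  P.-integrable setT (fun w => (epochE B b (Q2 F lam eta (X w)))%:E) ->
  P.-integrable setT (fun w => (epochE B b (Q3 F lam (X w)))%:E) ->
  b%:R * fullE P B b (Q1 F lam eta) X
  = - (eta * (1 - lam) * B%:R) * fullE P B b (Q2 F lam eta) X
    - eta * B%:R * fullE P B b (Q3 F lam) X.
Proof.
move=> n0 _ hB hb _ e1 e2 i1 i2 i3.
have B0 : (0 < B)%N by case/andP: hB.
have hp : forall w, b%:R * epochE B b (Q1 F lam eta (X w)) =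
   - (eta * (1 - lam) * B%:R) * epochE B b (Q2 F lam eta (X w))
   - eta * B%:R * epochE B b (Q3 F lam (X w)).
  move=> w; rewrite /epochE !mulr_sumr -sumrB; apply: eq_bigr => I hI.
  rewrite mulrCA geom_id //; [ring | exact: e1 | exact: e2].
have iZ : forall (f : Omega -> R) c, P.-integrable setT (fun w => (f w)%:E) ->
    P.-integrable setT (EFin \o (fun w => c * f w)).
  move=> f c hf.
  have -> : (EFin \o fun w => c * f w) = (fun w => (c%:E * (f w)%:E)%E).
    by apply: funext => w; rewrite /= EFinM.
  exact: integrableZl.
rewrite /fullE -RintegralZl //.
transitivity (Rintegral P setT (fun w => - (eta * (1 - lam) * B%:R) * epochE B b (Q2 F lam eta (X w))
   - eta * B%:R * epochE B b (Q3 F lam (X w)))).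
  by apply: eq_Rintegral => w _; exact: hp.
rewrite RintegralB //; try exact: iZ.
by rewrite !RintegralZl.
Qed.
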